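(* Let $G$ be a graph with edge weights $w(e)\ge 1$, let $\alpha>1$ be a constant and $0<\epsilon<1$, and suppose $k=\ln\alpha/\ln(1+\epsilon)$ is a positive integer. For $j=1,\dots,k$ let $r(j)=\frac{j-1}{k}$ and let $w_{r(j)}$ be the rounded weight defined below. Let $\mathcal{M}$ be a maximum weight matching of $G$. Then there exists $j\in\{1,\dots,k\}$ such that $$w_{r(j)}(\mathcal{M})\ge(1-\epsilon)\frac{\alpha-1}{\alpha\ln\alpha}\,w(\mathcal{M}).$$
   Context: For $r\in[0,1)$, the rounded weight of an edge $e$ is $w_r(e)=\alpha^{l+r}$ where $l\in\mathbb{Z}$ is the unique integer with $w(e)\in[\alpha^{l+r},\alpha^{l+r+1})$. For an edge set $S$, $w(S)=\sum_{e\in S}w(e)$ and $w_r(S)=\sum_{e\in S}w_r(e)$. $\ln$ is the natural logarithm. *)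

(* Defs.v *)
From HB Require Import structures.
From mathcomp Require Import all_boot all_order all_algebra.
From mathcomp Require Import all_classical all_reals all_analysis.
Set Implicit Arguments. Unset Strict Implicit. Unset Printing Implicit Defensive.
Import Order.TTheory GRing.Theory Num.Theory.
Local Open Scope ring_scope.

Definition is_graph (T : finType) (E : {set {set T}}) : Prop :=
  forall e, e \in E -> #|e| = 2%N.

Definition is_matching (T : finType) (E M : {set {set T}}) : Prop :=
  M \subset E /\
  (forall e f, e \in M -> f \in M -> e != f -> [disjoint e & f]).

Definition wsum (R : realType) (T : finType) (w : {set T} -> R)
  (S : {set {set T}}) : R := \sum_(e in S) w e.

Definition is_max_weight_matching (R : realType) (T : finType)
  (E : {set {set T}}) (w : {set T} -> R) (M : {set {set T}}) : Prop :=
  is_matching E M /\ forall M', is_matching E M' -> wsum w M' <= wsum w M.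

(* Rounded value: alpha^(l + r) where l is the unique integer with
   x \in [alpha^(l+r), alpha^(l+r+1)), i.e. l = floor(log_alpha x - r). *)
Definition round_w (R : realType) (alpha r x : R) : R :=
  alpha `^ ((Num.floor (ln x / ln alpha - r))%:~R + r).

Definition rounded_weight (R : realType) (T : finType) (alpha r : R)
  (w : {set T} -> R) : {set T} -> R := fun e => round_w alpha r (w e).

(* Main.v *)
Require Import Defs.
From HB Require Import structures.
From mathcomp Require Import all_boot all_order all_algebra.
From mathcomp Require Import all_classical all_reals all_analysis.
From mathcomp Require Import ring lra.
Import Order.TTheory GRing.Theory Num.Theory.
Local Open Scope ring_scope.

Lemma per_j (R : realType) (alpha L x : R) (k n m j : nat) :
  (0 < k)%N -> 0 < L -> ln alpha = k%:R * L -> 1 < alpha -> 1 <= x ->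
  n%:R * L <= ln x < n.+1%:R * L -> ((m + j) %% k = n %% k)%N ->
  x * expR (- (m.+1%:R * L)) <= round_w alpha (j%:R / k%:R) x.
Proof.
move=> k0 L0 hla a1 x1 /andP[hn1 hn2] hmod.
have kR : 0 < k%:R :> R by rewrite ltr0n.
set z : int := (n %/ k)%:Z - ((m + j) %/ k)%:Z.
have hz : z%:~R * k%:R = n%:R - m%:R - j%:R :> R.
  have hc : forall p : nat, (p%:Z)%:~R = p%:R :> R by [].
  rewrite /z intrB !hc mulrBl -!natrM.
  have e1 := divn_eq n k. have e2 := divn_eq (m + j) k.
  have : (n %/ k * k)%:R + (n %% k)%:R = n%:R :> R by rewrite -natrD -e1.
  have : ((m + j) %/ k * k)%:R + ((m+j) %% k)%:R = m%:R + j%:R :> R by rewrite -!natrD -e2.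
  rewrite hmod. lra.
rewrite /round_w.
set F := Num.floor _.
have hzF : z <= F.
  rewrite floor_ge_int.
  have -> : ln x / ln alpha - j%:R / k%:R = (ln x - j%:R * L) / (k%:R * L).
    rewrite hla; field; apply/andP; split; apply/lt0r_neq0 => //.
  rewrite ler_pdivlMr ?mulr_gt0 // mulrA hz.
  have : 0 <= m%:R * L by rewrite mulr_ge0 // ltW.
  nra.
have hzF' : z%:~R <= F%:~R :> R by rewrite ler_int.
have a0 : alpha != 0 by apply/lt0r_neq0; lra.
rewrite /powR (negbTE a0).
have x0 : 0 < x by lra.
rewrite -{1}(lnK x0) -expRD ler_expR.
have A : (F%:~R + j%:R / k%:R) * ln alpha = F%:~R * (k%:R * L) + j%:R * L.
  rewrite hla; field; apply/lt0r_neq0 => //.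
rewrite A.
have B : z%:~R * (k%:R * L) <= F%:~R * (k%:R * L) by rewrite ler_wpM2r // mulr_ge0 // ltW.
have C : z%:~R * (k%:R * L) = n%:R * L - m%:R * L - j%:R * L by rewrite mulrA hz !mulrBl.
have D : m.+1%:R * L = m%:R * L + L by rewrite -addn1 natrD mulrDl mul1r.
have E : n.+1%:R * L = n%:R * L + L by rewrite -addn1 natrD mulrDl mul1r.
lra.
Qed.

Lemma edge (R : realType) (alpha L x : R) (k' : nat) :
  0 < L -> ln alpha = k'.+1%:R * L -> 1 < alpha -> 1 <= x ->
  x * \sum_(i < k'.+1) expR (- (i.+1%:R * L)) <=
  \sum_(i < k'.+1) round_w alpha (i%:R / k'.+1%:R) x.
Proof.
move=> L0 hla a1 x1.
have lx0 : 0 <= ln x / L by rewrite divr_ge0 ?ln_ge0 // ltW.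
have /andP[h1 h2] := truncn_itv lx0.
set n := Num.trunc _ in h1 h2.
have hn : n%:R * L <= ln x < n.+1%:R * L.
  by rewrite -ler_pdivlMr // -ltr_pdivrMr // h1 h2.
pose c : 'I_k'.+1 := inZp n.
rewrite (reindex_inj (can_inj (subKr c))) /= mulr_sumr.
apply: ler_sum => j _.
apply: (@per_j R alpha L x k'.+1 n) => //.
by have := congr1 val (subrK j c).
Qed.

Lemma geo (R : realType) (q eps : R) (k : nat) :
  q * (1 + eps) = 1 -> eps * \sum_(i < k) q ^+ i.+1 = 1 - q ^+ k.
Proof.
move=> hq; elim: k => [|k IH]; first by rewrite big_ord0 mulr0 expr0 subrr.
have h : eps * q = 1 - q by rewrite -hq; ring.
rewrite big_ord_recr /= mulrDr IH exprS mulrA h; ring.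
Qed.

Theorem lemma8 (R : realType) (T : finType) (E : {set {set T}})
  (w : {set T} -> R) (alpha eps : R) (k : nat) (M : {set {set T}}) :
  is_graph E ->
  (forall e, e \in E -> 1 <= w e) ->
  1 < alpha -> 0 < eps -> eps < 1 ->
  (0 < k)%N -> k%:R = ln alpha / ln (1 + eps) ->
  is_max_weight_matching E w M ->
  exists j : nat, (1 <= j <= k)%N /\
    wsum (rounded_weight alpha ((j%:R - 1) / k%:R) w) M >=
      (1 - eps) * ((alpha - 1) / (alpha * ln alpha)) * wsum w M.
Proof.
move=> _ hw a1 e0 e1 k0 hk [[hME _] _].
case: k k0 hk => [//|k'] _ hk.
set L := ln (1 + eps).
have L0 : 0 < L by rewrite /L ln_gt0 // ltrDl.
have hla : ln alpha = k'.+1%:R * L by rewrite hk divfK // lt0r_neq0.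
have la0 : 0 < ln alpha by rewrite ln_gt0.
have a0 : 0 < alpha by lra.
set W := wsum w M.
have hwM : forall e, e \in M -> 1 <= w e by move=> e /(fintype.subsetP hME) /hw.
have W0 : 0 <= W by rewrite /W /wsum sumr_ge0 // => e /hwM; lra.
set G := \sum_(i < k'.+1) expR (- (i.+1%:R * L)).
set q := expR (- L).
have hq : q * (1 + eps) = 1.
  have p0 : 0 < 1 + eps by lra.
  rewrite /q expRN lnK ?posrE // mulVf //; exact: lt0r_neq0.
have hG : eps * G = 1 - alpha^-1.
  have -> : G = \sum_(i < k'.+1) q ^+ i.+1.
    by apply: eq_bigr => i _; rewrite /q -expRM_natl mulrN.
  rewrite (@geo R q eps _ hq) /q -expRM_natl mulrN -hla expRN lnK //.
set C := (1 - eps) * ((alpha - 1) / (alpha * ln alpha)).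
have hL : eps / (1 + eps) <= L.
  have := expR_ge1Dx (- (eps / (1 + eps))).
  have -> : 1 + - (eps / (1 + eps)) = expR (- L).
    rewrite expRN lnK ?posrE; last lra.
    field; apply/lt0r_neq0; lra.
  by rewrite ler_expR lerN2.
have hL2 : eps * (1 - eps) <= L.
  move: hL; rewrite ler_pdivrMr; last lra.
  nra.
have hkC : k'.+1%:R * C <= G.
  have -> : G = (1 - alpha^-1) / eps by rewrite -hG [eps * G]mulrC mulfK // lt0r_neq0.
  have -> : k'.+1%:R * C = (1 - alpha^-1) * ((1 - eps) / L).
    rewrite /C hla; field.
    by rewrite !lt0r_neq0 //; lra.
  rewrite [X in _ <= X]mulrC [X in _ <= X]mulrC ler_wpM2l //.
    by rewrite subr_ge0 invf_le1 //; lra.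
  rewrite ler_pdivrMr // ler_pdivlMl //; nra.
set S := fun i : nat => wsum (rounded_weight alpha (i%:R / k'.+1%:R) w) M.
have hS : W * G <= \sum_(i < k'.+1) S i.
  rewrite /S /wsum /rounded_weight exchange_big /= mulr_suml.
  apply: ler_sum => e /hwM he.
  exact: (@edge R alpha L (w e) k').
case: (pselect (exists j : 'I_k'.+1, C * W <= S j)) => [[j hj]|hno].
  exists j.+1; split; first by rewrite /= ltn_ord.
  by have -> : (j.+1%:R - 1 : R) = j%:R by rewrite -addn1 natrD addrK.
exfalso.
have hlt : \sum_(i < k'.+1) S i < \sum_(i < k'.+1) (C * W).
  apply: ltr_sum.
    by apply/hasP; exists ord0; rewrite ?mem_index_enum.
  move=> i _; rewrite ltNge; apply/negP => hi; apply: hno; by exists i.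
move: hlt; rewrite sumr_const card_ord -mulr_natl.
have : k'.+1%:R * C * W <= W * G by rewrite mulrC ler_wpM2l.
lra.
Qed.
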